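(* Let $I=\{x_1,\dots,x_n\}$ be a set of indices and $\prec$ a linear order on $I$. For any tensor $\phi$ with index set $I$, there exists a $\prec$-ordered normal TDD $\mathcal F$ such that $\Phi(\mathcal F)=\phi$.
   Context: Indices take values in $\{0,1\}$; a tensor over $I$ is a map $\{0,1\}^I\to\mathbb{C}$ (tensors over subsets of $I$ are regarded as tensors over $I$ not depending on the other indices). Each index $x$ is regarded as the tensor $x(c)=c$, and $\overline{x}(c):=1-c$; operations on tensors are pointwise. A TDD over $I$ is $\mathcal F=(V,E,index,value,low,high,w)$: a rooted directed acyclic graph with finite node set $V$ partitioned into non-terminal nodes $V_N$ and terminal nodes $V_T$, root $r_{\mathcal F}$; $index:V_N\to I$; $value:V_T\to\mathbb{C}$; $low,high:V_N\to V$; edges are the low-edges $(v,low(v))$ and high-edges $(v,high(v))$, $v\in V_N$, plus a unique source-less incoming edge $e_r$ of the root; $w$ gives each edge a complex weight and $w_{\mathcal F}:=w(e_r)$. Node tensors: $\Phi(v)=value(v)$ for terminal $v$; otherwise $\Phi(v)=w_0\overline{x_v}\Phi(low(v))+w_1x_v\Phi(high(v))$ with $x_v=index(v)$ and $w_0,w_1$ the low-/high-edge weights. The TDD represents $\Phi(\mathcal F):=w_{\mathcal F}\Phi(r_{\mathcal F})$. $\mathcal F$ is $\prec$-ordered if for every non-terminal node $v$, $index(v)\prec index(low(v))$ whenever $low(v)$ is non-terminal and $index(v)\prec index(high(v))$ whenever $high(v)$ is non-terminal. Normality (w.r.t. $\prec$): the pivot of a tensor $\phi$ is the lexicographically smallest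 (compare at the $\prec$-smallest differing index, $0<1$) $\vec a$ with $|\phi(\vec a)|=\max_{\vec b}|\phi(\vec b)|$; $\phi$ is normal if $\phi=0$ or $\phi$ equals $1$ at its pivot. A TDD is normal if $\Phi(v)$ is normal for every node $v$. *)

(* Defs.v *)
From HB Require Import structures.
From mathcomp Require Import all_boot all_order all_algebra.
Set Implicit Arguments. Unset Strict Implicit. Unset Printing Implicit Defensive.
Import Order.TTheory GRing.Theory Num.Theory.
Local Open Scope ring_scope.

(* Index values {0,1} are encoded as bool (false = 0, true = 1).
   A tensor over I is a map {0,1}^I -> C. *)
Definition assignment (I : finType) := {ffun I -> bool}.
Definition tensor (I : finType) (C : Type) := assignment I -> C.

Definition b2C (C : numClosedFieldType) (b : bool) : C := if b then 1 else 0.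

Definition strict_linear_order (I : finType) (prec : rel I) : Prop :=
  [/\ forall x, ~~ prec x x,
      forall x y z, prec x y -> prec y z -> prec x z
    & forall x y, x != y -> prec x y || prec y x].

(* Nodes form a finite type [node];
   [kind v = None] means v is terminal, [kind v = Some x] means v is
   non-terminal with index(v) = x.  [value] is only relevant on terminal
   nodes; [low], [high], [wlow], [whigh] only on non-terminal nodes
   (wlow v / whigh v are the weights of the low-/high-edge of v).
   [wroot] is the weight of the root's incoming edge e_r. *)
Record TDD (I : finType) (C : Type) := MkTDD {
  node : finType;
  root : node;
  kind : node -> option I;
  value : node -> C;
  low : node -> node;
  high : node -> node;
  wlow : node -> C;
  whigh : node -> C;
  wroot : C
}.

Definition tdd_edge (I : finType) C (F : TDD I C) : rel (node F) :=
  fun u v => (kind u != None) && ((v == low u) || (v == high u)).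

Definition tdd_wf (I : finType) C (F : TDD I C) : Prop :=
  (forall v, connect (@tdd_edge I C F) (root F) v) /\
  (forall u v, tdd_edge u v -> ~~ connect (@tdd_edge I C F) v u).

(* Node tensors, computed by recursion with fuel; in an acyclic graph with
   finitely many nodes, fuel #|node F| suffices, so [node_tensor] is the
   tensor Phi(v) of the paper. *)
Fixpoint phi_fuel (I : finType) (C : numClosedFieldType) (F : TDD I C) (k : nat)
    (v : node F) : tensor I C :=
  match k with
  | 0 => fun _ => value v
  | k'.+1 =>
    match kind v with
    | None => fun _ => value v
    | Some x => fun a =>
        wlow v * (1 - b2C C (a x)) * phi_fuel k' (low v) a
        + whigh v * b2C C (a x) * phi_fuel k' (high v) a
    end
  end.

Definition node_tensor (I : finType) (C : numClosedFieldType) (F : TDD I C) (v : node F)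
  : tensor I C := phi_fuel #|node F| v.

Definition tdd_tensor (I : finType) (C : numClosedFieldType) (F : TDD I C) : tensor I C :=
  fun a => wroot F * node_tensor (root F) a.

Definition tdd_ordered (I : finType) C (prec : rel I) (F : TDD I C) : Prop :=
  forall (v : node F) x, kind v = Some x ->
    (forall y, kind (low v) = Some y -> prec x y) /\
    (forall y, kind (high v) = Some y -> prec x y).

Definition lex_lt (I : finType) (prec : rel I) (a b : assignment I) : Prop :=
  exists x, [/\ a x = false, b x = true & forall y, prec y x -> a y = b y].

Definition is_pivot (I : finType) (C : numClosedFieldType) (prec : rel I)
    (phi : tensor I C) (a : assignment I) : Prop :=
  (forall b, `|phi b| <= `|phi a|) /\
  (forall b, `|phi b| = `|phi a| -> b <> a -> lex_lt prec a b).

Definition normal_tensor (I : finType) (C : numClosedFieldType) (prec : rel I)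
    (phi : tensor I C) : Prop :=
  (forall a, phi a = 0) \/ (exists a, is_pivot prec phi a /\ phi a = 1).

Definition tdd_normal (I : finType) (C : numClosedFieldType) (prec : rel I)
    (F : TDD I C) : Prop :=
  forall v : node F, normal_tensor prec (node_tensor v).

(* Main.v *)
Require Import Defs.
From mathcomp Require Import all_boot all_order all_algebra.
From mathcomp Require Import zify.
From Stdlib Require Import FunctionalExtensionality.
Set Implicit Arguments. Unset Strict Implicit. Unset Printing Implicit Defensive.
Import Order.TTheory GRing.Theory Num.Theory.
Local Open Scope ring_scope.

Lemma exists_min (T : finType) (r : rel T) (S : {set T}) (x0 : T) :
  irreflexive r -> transitive r -> x0 \in S ->
  exists2 x, x \in S & forall y, y \in S -> ~~ r y x.
Proof.
move=> irr tr x0S.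
pose cnt x := #|[set y in S | r y x]|.
case: (@arg_minnP _ x0 (mem S) cnt x0S) => x xS xmin.
exists x => // y yS; apply/negP => ryx.
have := xmin y yS; rewrite leqNgt => /negP; apply.
apply: proper_card; apply/properP; split.
  apply/subsetP => z; rewrite !inE => /andP[-> rzy] /=; exact: tr rzy ryx.
by exists y; rewrite !inE ?yS ?ryx ?irr.
Qed.

Section Lex.
Variables (I : finType) (prec : rel I).
Hypothesis Hord : strict_linear_order prec.

Definition lexb (a b : assignment I) : bool :=
  [exists x, [&& ~~ a x, b x & [forall y, prec y x ==> (a y == b y)]]].

Lemma lexbP a b : reflect (lex_lt prec a b) (lexb a b).
Proof.
apply: (iffP existsP) => [[x /and3P[ax bx /forallP H]]|[x [ax bx H]]].
  exists x; split => //; first by apply/negbTE.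
  by move=> y pyx; apply/eqP; have := H y; rewrite pyx.
exists x; rewrite ax bx /=; apply/forallP => y; apply/implyP => pyx.
by rewrite H.
Qed.

Lemma lexb_irr : irreflexive lexb.
Proof. by move=> a; apply/existsP => -[x /and3P[/negP]]. Qed.

Lemma lexb_trans : transitive lexb.
Proof.
case: Hord => irr tr tot.
move=> b a c /lexbP[x [ax bx Hx]] /lexbP[y [by_ cy Hy]]; apply/lexbP.
have [exy|nxy] := eqVneq x y.
  by subst y; rewrite bx in by_.
case/orP: (tot _ _ nxy) => [pxy|pyx].
  exists x; split => //; first by rewrite -(Hy _ pxy).
  by move=> z pzx; rewrite Hx // Hy //; exact: tr pzx pxy.
exists y; split => //; first by rewrite Hx.
by move=> z pzy; rewrite Hx ?Hy //; exact: tr pzy pyx.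
Qed.

Lemma lexb_tot a b : a != b -> lexb a b || lexb b a.
Proof.
case: Hord => irr tr tot.
move=> nab.
have [x0 Hx0] : exists x, a x != b x.
  apply/existsP; apply: contraR nab => /existsPn H.
  by apply/eqP/ffunP => x; apply/eqP; have := H x; rewrite negbK.
have x0D : x0 \in [set x | a x != b x] by rewrite inE.
have [x xD xmin] := @exists_min _ prec [set x | a x != b x] x0 (fun x => negbTE (irr x)) (fun y x z h1 h2 => tr x y z h1 h2) x0D.
have Hx : forall y, prec y x -> a y = b y.
  move=> y pyx; apply/eqP/negPn/negP => H.
  by have := xmin y; rewrite inE H pyx => /(_ isT).
rewrite inE in xD.
case ax : (a x); move: xD; rewrite ax; case bx : (b x) => // _.
  by apply/orP; right; apply/lexbP; exists x; split => // y /Hx ->.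
by apply/orP; left; apply/lexbP; exists x; split.
Qed.

Variable C : numClosedFieldType.

Definition is_pivotb (psi : tensor I C) (a : assignment I) : bool :=
  [forall b, `|psi b| <= `|psi a|] &&
  [forall b, (`|psi b| == `|psi a|) ==> (b != a) ==> lexb a b].

Lemma pivot_exists psi : exists a, is_pivotb psi a.
Proof.
have a0 : assignment I := [ffun _ => false].
have [m _ mmax] := @exists_min _ (fun y x => `|psi x| < `|psi y|) setT a0
   (fun x => ltxx _) (fun y x z h1 h2 => lt_trans h2 h1) (in_setT a0).
have mmax' : forall b, `|psi b| <= `|psi m|.
  move=> b; rewrite real_leNgt ?normr_real //; exact: mmax (in_setT b).
have mM : m \in [set b | `|psi b| == `|psi m|] by rewrite inE.
have [p pM pmin] := @exists_min _ lexb [set b | `|psi b| == `|psi m|] m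
   lexb_irr lexb_trans mM.
rewrite inE in pM; move/eqP: pM => pM.
exists p; apply/andP; split; apply/forallP => b; first by rewrite pM.
apply/implyP => /eqP hb; apply/implyP => nbp.
have := lexb_tot nbp; have := pmin b; rewrite inE hb pM eqxx => /(_ isT).
by move/negbTE => ->.
Qed.

Definition piv (psi : tensor I C) : assignment I := xchoose (pivot_exists psi).

Lemma pivP psi : is_pivot prec psi (piv psi).
Proof.
have /andP[/forallP H1 /forallP H2] := xchooseP (pivot_exists psi).
split => // b /eqP hb /eqP nb; apply/lexbP.
by have := H2 b; rewrite hb nb.
Qed.

Definition cst (psi : tensor I C) : C := psi (piv psi).

Lemma normK psi a : psi a = cst psi * (psi a / cst psi).
Proof.
have [c0|cn0] := eqVneq (cst psi) 0.
  have : `|psi a| <= `|cst psi| by case: (pivP psi).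
  by rewrite c0 normr0 normr_le0 => /eqP ->; rewrite !mul0r.
by rewrite mulrC divfK.
Qed.

Lemma normal_div psi : normal_tensor prec (fun a => psi a / cst psi).
Proof.
have [c0|cn0] := eqVneq (cst psi) 0.
  by left => a; rewrite c0 invr0 mulr0.
right; exists (piv psi); split; last by rewrite divff.
have [P1 P2] := pivP psi.
have np : 0 < `|cst psi|^-1 by rewrite invr_gt0 normr_gt0.
split.
  by move=> b; rewrite !normrM !normfV ler_pM2r //; exact: P1.
move=> b; rewrite !normrM !normfV => /(mulIf (lt0r_neq0 np)) hb nb.
exact: P2.
Qed.

End Lex.

Section Build.
Variables (I : finType) (prec : rel I) (C : numClosedFieldType).
Hypothesis Hord : strict_linear_order prec.
Variable phi : tensor I C.

Local Notation n := #|I|.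
Definition rk (x : I) : nat := #|[set y | prec y x]|.

Lemma rk_lt x : (rk x < n)%N.
Proof.
case: Hord => irr _ _.
rewrite /rk -cardsT; apply: proper_card; apply/properP; split.
  by apply/subsetP => ? _; exact: in_setT.
by exists x; rewrite ?inE ?irr.
Qed.

Lemma rk_prec x y : prec x y -> (rk x < rk y)%N.
Proof.
case: Hord => irr tr _ pxy.
apply: proper_card; apply/properP; split.
  by apply/subsetP => z; rewrite !inE => h; exact: tr h pxy.
by exists x; rewrite !inE ?irr.
Qed.

Lemma rk_inj : injective rk.
Proof.
case: Hord => _ _ tot x y e; apply/eqP/negPn/negP => nxy.
by case/orP: (tot _ _ nxy) => /rk_prec; rewrite e ltnn.
Qed.

Lemma prec_rk x y : (rk x < rk y)%N -> prec x y.
Proof.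
case: Hord => _ _ tot h.
have [exy|nxy] := eqVneq x y; first by rewrite exy ltnn in h.
case/orP: (tot _ _ nxy) => // /rk_prec h'.
by have := ltn_trans h h'; rewrite ltnn.
Qed.

Lemma rk_surj k : (k < n)%N -> exists x, rk x = k.
Proof.
move=> hk.
pose f : I -> 'I_n := fun x => Ordinal (rk_lt x).
have finj : injective f by move=> x y /(congr1 val) /= /rk_inj.
have hc : (#|'I_n| <= #|I|)%N by rewrite card_ord.
have := inj_card_onto finj hc (Ordinal hk).
move=> /codomP [x /(congr1 val) /= ->].
by exists x.
Qed.

Definition canon (p : 'I_n.+1 * {ffun I -> bool}) : bool :=
  [forall y, (p.1 <= rk y)%N ==> ~~ p.2 y].
Definition nodeT : finType := {p : 'I_n.+1 * {ffun I -> bool} | canon p}.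

Definition kk (v : nodeT) : nat := (val v).1.
Definition ff (v : nodeT) : {ffun I -> bool} := (val v).2.

Lemma canon_mk k (f : {ffun I -> bool}) :
  canon (inord (minn k n), [ffun y => (rk y < k)%N && f y]).
Proof.
apply/forallP => y /=; rewrite ffunE inordK ?ltnS ?geq_minr //.
apply/implyP => h; rewrite negb_and -leqNgt; apply/orP; left.
move: h; rewrite /minn; case: ltnP => // hkn h.
by move: (rk_lt y); rewrite ltnNge h.
Qed.

Definition mk k f : nodeT := @exist _ canon _ (canon_mk k f).

Lemma kk_mk k f : kk (mk k f) = minn k n.
Proof. by rewrite /kk /= inordK // ltnS geq_minr. Qed.
Lemma ff_mk k f y : ff (mk k f) y = (rk y < k)%N && f y.
Proof. by rewrite /ff /= ffunE. Qed.
Lemma kk_le v : (kk v <= n)%N.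
Proof. rewrite -ltnS; exact: ltn_ord. Qed.
Lemma ffc v y : (kk v <= rk y)%N -> ff v y = false.
Proof. by move=> h; have /forallP/(_ y) := valP v; rewrite /kk /ff in h *; rewrite h /= => /negbTE. Qed.
Lemma node_eq u v : kk u = kk v -> (forall y, ff u y = ff v y) -> u = v.
Proof.
case: u v => [[k f] Hu] [[k' f'] Hv]; rewrite /kk /ff /= => hk hf.
apply/val_inj => /=; congr pair; [exact: val_inj | exact/ffunP].
Qed.
Definition kindf (v : nodeT) : option I := [pick x | rk x == kk v].
Definition R (v : nodeT) : tensor I C :=
  fun a => phi [ffun y => if (rk y < kk v)%N then ff v y else a y].
Definition cR v := cst Hord (R v).
Definition T (v : nodeT) : tensor I C := fun a => R v a / cR v.
Definition lowf v := mk (kk v).+1 (ff v).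
Definition highf v := mk (kk v).+1 [ffun y => (rk y == kk v) || ff v y].
Definition rootn := mk 0 [ffun _ => false].
Definition tdd : TDD I C :=
  @MkTDD I C nodeT rootn kindf (fun v => T v (ff v)) lowf highf
    (fun v => cR (lowf v) / cR v) (fun v => cR (highf v) / cR v) (cR rootn).

Lemma kind_lt v : (kk v < n)%N -> exists x, kindf v = Some x /\ rk x = kk v.
Proof.
move=> hk; have [x hx] := rk_surj hk.
rewrite /kindf; case: pickP => [y /eqP hy|/(_ x)]; first by exists y.
by rewrite hx eqxx.
Qed.
Lemma kind_none v : kk v = n -> kindf v = None.
Proof.
move=> hk; rewrite /kindf; case: pickP => // x /eqP hx.
by have := rk_lt x; rewrite hx hk ltnn.
Qed.
Lemma kind_some v x : kindf v = Some x -> rk x = kk v.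
Proof. by rewrite /kindf; case: pickP => // y /eqP h [<-]. Qed.
Lemma kind_ltn v x : kindf v = Some x -> (kk v < n)%N.
Proof. by move/kind_some <-; exact: rk_lt. Qed.
Lemma kk_low v : (kk v < n)%N -> kk (lowf v) = (kk v).+1.
Proof. by move=> h; rewrite kk_mk; apply/minn_idPl. Qed.
Lemma kk_high v : (kk v < n)%N -> kk (highf v) = (kk v).+1.
Proof. by move=> h; rewrite kk_mk; apply/minn_idPl. Qed.

Lemma R_split v x a : rk x = kk v -> (kk v < n)%N ->
  R v a = if a x then R (highf v) a else R (lowf v) a.
Proof.
move=> hx hk; rewrite /R kk_low // kk_high //.
case ax: (a x); congr phi; apply/ffunP => y; rewrite !ffunE;
 have [lt|gt|eq] := ltngtP (rk y) (kk v);
 [ by rewrite (leqW lt) | by rewrite ltnS leqNgt gt | idtac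
 | by rewrite (leqW lt) | by rewrite ltnS leqNgt gt | idtac ];
 (have exy : y = x by apply: rk_inj; rewrite eq hx);
 by subst y; rewrite eq ltnSn ax ?ffc // hx.
Qed.

Lemma R_term v a b : kk v = n -> R v a = R v b.
Proof. by move=> h; rewrite /R; congr phi; apply/ffunP => y; rewrite !ffunE h rk_lt. Qed.

Lemma fuelS m v a x : kindf v = Some x ->
  @phi_fuel I C tdd m.+1 v a =
    cR (lowf v) / cR v * (1 - b2C C (a x)) * @phi_fuel I C tdd m (lowf v) a
  + cR (highf v) / cR v * b2C C (a x) * @phi_fuel I C tdd m (highf v) a.
Proof. by move=> h /=; rewrite h. Qed.

Lemma fuel0 m v a : kindf v = None -> @phi_fuel I C tdd m v a = T v (ff v).
Proof. by case: m => [|m] //= ->. Qed.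

Lemma fuel_ok m : forall v a, (n - kk v <= m)%N -> @phi_fuel I C tdd m v a = T v a.
Proof.
elim: m => [|m IH] v a h.
  have hk : kk v = n by have := kk_le v; lia.
  by rewrite fuel0 ?kind_none // /T (R_term (ff v) a hk).
have [hk|hk] := ltnP (kk v) n; last first.
  have hk' : kk v = n by have := kk_le v; lia.
  by rewrite fuel0 ?kind_none // /T (R_term (ff v) a hk').
have [x [hkx hx]] := kind_lt hk.
rewrite (fuelS _ _ hkx) !IH ?kk_low ?kk_high //; try lia.
rewrite /T (R_split a hx hk) /cR.
case: (a x) => /=.
  by rewrite subrr !mulr0 mul0r add0r mulr1 mulrAC -normK.
by rewrite subr0 !mulr0 mul0r addr0 mulr1 mulrAC -normK.
Qed.

Lemma card_node : (n <= #|nodeT|)%N.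
Proof.
pose f : 'I_n -> nodeT := fun i => mk i [ffun _ => false].
have finj : injective f.
  move=> i j /(congr1 kk); rewrite !kk_mk.
  by rewrite (minn_idPl (ltnW (ltn_ord i))) (minn_idPl (ltnW (ltn_ord j))) => /val_inj.
by have := leq_card f finj; rewrite card_ord.
Qed.

Lemma node_tensorE v a : node_tensor (F:=tdd) v a = T v a.
Proof.
apply: fuel_ok; have := card_node; have := kk_le v.
change #|node tdd| with #|nodeT|; lia.
Qed.

Notation E := (@tdd_edge I C tdd).

Lemma edge_kk u v : E u v -> kk v = (kk u).+1.
Proof.
rewrite /tdd_edge /= => /andP[hn /orP[]/eqP->]; rewrite kk_mk; apply/minn_idPl;
 have := kk_le u; case: (ltnP (kk u) n) => // h1 h2;
 by rewrite kind_none ?eqxx // in hn; apply/eqP; rewrite eqn_leq h2 h1.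
Qed.

Lemma conn_kk u v : connect E u v -> (kk u <= kk v)%N.
Proof.
move/connectP => [p pth ->]; elim: p u pth => //= w p IH u /andP[euw pth].
by apply: leq_trans (IH _ pth); rewrite (edge_kk euw).
Qed.

Lemma reach k : forall v, kk v = k -> connect E rootn v.
Proof.
elim: k => [|k IH] v hv.
  have -> : v = rootn; last exact: connect0.
  apply: node_eq; first by rewrite hv kk_mk min0n.
  by move=> y; rewrite ff_mk ffc // hv.
have hk : (k < n)%N by have := kk_le v; rewrite hv.
have [x0 hx0] := rk_surj hk.
pose u := mk k (ff v).
have hu : kk u = k by rewrite kk_mk; apply/minn_idPl; exact: ltnW.
apply: connect_trans (IH u hu) (connect1 _).
have hku : (kk u < n)%N by rewrite hu.
have [x [hkx _]] := kind_lt hku.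
apply/andP; split; first by rewrite /= hkx.
apply/orP; case hb: (ff v x0); [right|left]; apply/eqP; apply: node_eq;
  try by rewrite hv ?kk_high ?kk_low hu.
- move=> y; rewrite /= ff_mk ffunE ff_mk hu.
  have [lt|gt|eq] := ltngtP (rk y) k.
  + by rewrite (leqW lt).
  + by rewrite ffc ?andbF ?hv.
  + have exy : y = x0 by apply: rk_inj; rewrite eq hx0.
    by subst y; rewrite eq ltnSn hb.
- move=> y; rewrite /= ff_mk ff_mk hu.
  have [lt|gt|eq] := ltngtP (rk y) k.
  + by rewrite (leqW lt).
  + by rewrite ffc ?andbF ?hv.
  + have exy : y = x0 by apply: rk_inj; rewrite eq hx0.
    by subst y; rewrite hb !andbF.
Qed.

Lemma tdd_ok :
  [/\ tdd_wf tdd, tdd_ordered prec tdd, tdd_normal prec tdd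
    & forall a, tdd_tensor tdd a = phi a].
Proof.
split.
- split; first by move=> v; exact: (reach (erefl _)).
  move=> u v euv; apply/negP => /conn_kk; rewrite (edge_kk euv) ltnn.
  by [].
- move=> v x /= hvx; have hx := kind_some hvx; have hk := kind_ltn hvx.
  split => y hy; have hy' := kind_some hy; apply: prec_rk;
    rewrite hx hy' ?kk_low ?kk_high //.
- move=> v.
  have -> : node_tensor (F:=tdd) v = T v.
    by apply: functional_extensionality => a; exact: node_tensorE.
  exact: normal_div.
- move=> a; rewrite /tdd_tensor node_tensorE /= /T /cR -normK /R.
  congr phi; apply/ffunP => y; rewrite !ffunE kk_mk min0n.
  by [].
Qed.

End Build.

Unset Implicit Arguments.
Set Strict Implicit.
Local Close Scope ring_scope.

Theorem theorem2 (I : finType) (prec : rel I) (C : numClosedFieldType) :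
  strict_linear_order prec ->
  forall phi : tensor I C,
  exists F : TDD I C,
    [/\ tdd_wf F, tdd_ordered prec F, tdd_normal prec F
      & forall a, tdd_tensor F a = phi a].
Proof. by move=> Hord phi; exists (tdd Hord phi); exact: tdd_ok. Qed.
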